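(* Let $n\ge 1$, $d_1,\dots,d_n\ge 1$, $L_i\in\mathbb{C}^{d_i\times d_i}$ ($i=1,\dots,n$) and $C_{i,i-1}\in\mathbb{C}^{d_i\times d_{i-1}}$ ($i=2,\dots,n$). Assume: (i) each $L_i$ is invertible and diagonalizable, $L_iV_i=V_i\Lambda_i$ with $V_i$ invertible and $\Lambda_i=\mathrm{diag}(\lambda_{i,1},\dots,\lambda_{i,d_i})$; (ii) $\sigma(L_i)\cap\sigma(L_j)=\emptyset$ for all $i\neq j$; (iii) $\|L_1\|<\|L_2\|<\cdots<\|L_n\|\le 1$. Fix $i\in\{1,\dots,n\}$ and $s_i\in\{1,\dots,d_i\}$. Then $\Psi_{i,s_i}\circ\mathsf{pert}$ is an eigenfunction of the Koopman operator $\mathcal U_{\mathsf{Lin}}$ (defined by $\mathcal U_{\mathsf{Lin}}f=f\circ\mathsf{Lin}$) at eigenvalue $\lambda_{i,s_i}$, i.e. $\Psi_{i,s_i}(\mathsf{pert}(\mathsf{Lin}(x)))=\lambda_{i,s_i}\Psi_{i,s_i}(\mathsf{pert}(x))$ for all $x\in\mathbb{C}^{d_1}\times\cdots\times\mathbb{C}^{d_n}$.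
   Context: Each $\mathbb{C}^{d_i}$ carries a fixed norm, matrices carry the induced operator norm. $\mathsf{Lin}(x_1,\dots,x_n)=(L_1x_1,\;L_2x_2+C_{2,1}x_1,\;\dots,\;L_nx_n+C_{n,n-1}x_{n-1})$. The principal eigenfunction $\psi_{i,s}(x_i)=\hat e_s^{*}V_i^{-1}x_i$ ($\hat e_s$ the $s$-th standard basis vector of $\mathbb{C}^{d_i}$), and $\Psi_{i,s}(x_1,\dots,x_n)=\psi_{i,s}(x_i)$. Matrices $D_{i,j}$ ($1\le j\le i\le n$) are defined recursively in $i$: $D_{i,i}=I_{d_i}$; for $i\ge 2$, $1\le j\le i-1$, $[\tilde C_{i,j}]_{\ell,m}=[V_i^{-1}C_{i,i-1}D_{i-1,j}V_j]_{\ell,m}(1-\lambda_{j,m}/\lambda_{i,\ell})^{-1}$ and $D_{i,j}=L_i^{-1}V_i\tilde C_{i,j}V_j^{-1}$. Define $\mathsf{pert}_1(x_1)=x_1$, $\mathsf{pert}_i(x_1,\dots,x_i)=x_i+\sum_{j=1}^{i-1}(-1)^{i-1-j}D_{i,j}\mathsf{pert}_j(x_1,\dots,x_j)$ for $i\ge2$, and $\mathsf{pert}(x)=(\mathsf{pert}_1(x_1),\dots,\mathsf{pert}_n(x_1,\dots,x_n))$. *)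

(* Defs.v *)
From HB Require Import structures.
From mathcomp Require Import all_boot all_order all_algebra.
From mathcomp Require Import complex.
From mathcomp Require Import boolp classical_sets reals.
Set Implicit Arguments. Unset Strict Implicit. Unset Printing Implicit Defensive.
Import Order.TTheory GRing.Theory Num.Theory.
Local Open Scope ring_scope.
Local Open Scope classical_set_scope.

Definition cmod (R : realType) (a : R[i]) : R :=
  Num.sqrt (complex.Re a ^+ 2 + complex.Im a ^+ 2).

Definition is_norm (R : realType) (d : nat) (nu : 'cV[R[i]]_d -> R) : Prop :=
  [/\ forall x, 0 <= nu x,
      forall x, nu x = 0 -> x = 0,
      forall (a : R[i]) x, nu (a *: x) = cmod a * nu x
    & forall x y, nu (x + y) <= nu x + nu y].

Definition opnorm (R : realType) (d : nat) (nu : 'cV[R[i]]_d -> R)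
  (A : 'M[R[i]]_d) : R :=
  sup [set r : R | exists x : 'cV[R[i]]_d, x != 0 /\ r = nu (A *m x) / nu x].

(* ---- The block-bidiagonal linear system and the perturbation ----
   Indices are 0-based: block k (0 <= k < n) is paper's block k+1.
   d k = d_{k+1};  L k = L_{k+1};  V k = V_{k+1};  lam k s = lambda_{k+1,s+1};
   Cs k : 'M_(d k.+1, d k) is the paper's C_{k+2,k+1}. *)
Section Pert.
Variables (R : realType) (d : nat -> nat).
Variables (L V : forall k, 'M[R[i]]_(d k)) (lam : forall k, 'I_(d k) -> R[i]).
Variable Cs : forall k, 'M[R[i]]_(d k.+1, d k).

(* the identity matrix of size d i, seen in 'M_(d i, d j) (used only for j = i) *)
Definition idmx (i j : nat) : 'M[R[i]]_(d i, d j) := conform_mx 0 (1%:M : 'M_(d i)).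

(* Dmx i j = D_{i+1,j+1} for j <= i (and 0 for j > i, never used) *)
Fixpoint Dmx (i : nat) : forall j, 'M[R[i]]_(d i, d j) :=
  match i as i0 return forall j, 'M[R[i]]_(d i0, d j) with
  | 0 => fun j => if j == 0%N then idmx 0 j else 0
  | i'.+1 => fun j =>
      if j == i'.+1 then idmx i'.+1 j
      else if (j < i'.+1)%N then
        let M := invmx (V i'.+1) *m Cs i' *m Dmx i' j *m V j in
        let Ct := \matrix_(l < d i'.+1, m < d j)
                    (M l m * (1 - @lam j m / @lam i'.+1 l)^-1) in
        invmx (L i'.+1) *m V i'.+1 *m Ct *m invmx (V j)
      else 0
  end.

Definition Lin (x : forall k, 'cV[R[i]]_(d k)) : forall k, 'cV[R[i]]_(d k) :=
  fun k => match k as k0 return 'cV[R[i]]_(d k0) with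
           | 0 => L 0 *m x 0%N
           | k'.+1 => L k'.+1 *m x k'.+1 + Cs k' *m x k'
           end.

(* pert_aux m i: m is fuel; pert_aux m i = pert_{i+1} whenever m >= i *)
Fixpoint pert_aux (x : forall k, 'cV[R[i]]_(d k)) (m i : nat) : 'cV[R[i]]_(d i) :=
  match m with
  | 0 => x i
  | m'.+1 => x i + \sum_(j < i) ((-1) ^+ (i.-1 - j) *: (Dmx i j *m pert_aux x m' j))
  end.

Definition pert (x : forall k, 'cV[R[i]]_(d k)) (i : nat) : 'cV[R[i]]_(d i) :=
  pert_aux x i i.

Definition psi (i : nat) (s : 'I_(d i)) (y : 'cV[R[i]]_(d i)) : R[i] :=
  (invmx (V i) *m y) s 0.
Definition Psi (i : nat) (s : 'I_(d i)) (x : forall k, 'cV[R[i]]_(d k)) : R[i] :=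
  psi s (x i).

Definition Koopman (f : (forall k, 'cV[R[i]]_(d k)) -> R[i]) :
  (forall k, 'cV[R[i]]_(d k)) -> R[i] := fun x => f (Lin x).
End Pert.

(* Main.v *)
Require Import Defs.
From HB Require Import structures.
From mathcomp Require Import all_boot all_order all_algebra.
From mathcomp Require Import complex.
From mathcomp Require Import boolp classical_sets reals.
From mathcomp Require Import ring.
Import Order.TTheory GRing.Theory Num.Theory.
Set Implicit Arguments. Unset Strict Implicit.
Local Open Scope ring_scope.

Section Gen.
Variable F : fieldType.

Lemma eig_row (p : nat) (L V : 'M[F]_p) (a : 'I_p -> F) (s : 'I_p) :
  V \in unitmx -> L *m V = V *m diag_mx (\row_k a k) ->
  row s (invmx V) *m L = a s *: row s (invmx V) /\ row s (invmx V) != 0.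
Proof.
move=> Vu LV.
have H : invmx V *m L = diag_mx (\row_k a k) *m invmx V.
  by rewrite -[invmx V *m L]mulmx1 -(mulmxV Vu) !mulmxA -(mulmxA _ L) LV
     mulmxA mulVmx // mul1mx.
split.
  rewrite -row_mul H mul_diag_mx; apply/rowP => j; rewrite !mxE.
  by [].
apply/eqP => h.
have : row s (invmx V *m V) = 0 by rewrite row_mul h mul0mx.
rewrite mulVmx // => /rowP /(_ s); rewrite !mxE eqxx /=.
by move/eqP; rewrite oner_eq0.
Qed.

Lemma sylvester (p q r : nat) (Li Vi : 'M[F]_p) (Lj Vj : 'M[F]_q)
  (ai : 'I_p -> F) (aj : 'I_q -> F) (C1 : 'M[F]_(p, r)) (C2 : 'M[F]_(r, q)) :
  Li \in unitmx -> Vi \in unitmx -> Vj \in unitmx ->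
  Li *m Vi = Vi *m diag_mx (\row_k ai k) ->
  Lj *m Vj = Vj *m diag_mx (\row_k aj k) ->
  (forall l, ai l != 0) -> (forall l m, ai l != aj m) ->
  let M := invmx Vi *m C1 *m C2 *m Vj in
  let Ct := \matrix_(l < p, m < q) (M l m * (1 - aj m / ai l)^-1) in
  let D := invmx Li *m Vi *m Ct *m invmx Vj in
  Li *m D - D *m Lj = C1 *m C2.
Proof.
move=> Liu Viu Vju LVi LVj ai0 aij M Ct D.
have Hj : invmx Vj *m Lj = diag_mx (\row_k aj k) *m invmx Vj.
  by rewrite -[invmx Vj *m Lj]mulmx1 -(mulmxV Vju) !mulmxA -(mulmxA _ Lj) LVj
     mulmxA mulVmx // mul1mx.
have E : Ct *m diag_mx (\row_k aj k) = diag_mx (\row_k ai k) *m (Ct - M).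
  rewrite mul_mx_diag mul_diag_mx; apply/matrixP => l m; rewrite !mxE.
  have h1 := ai0 l; have h2 := aij l m.
  have h3 : 1 - aj m / ai l != 0.
    rewrite subr_eq0; apply/eqP => h; move: h2; rewrite -[aj m](divfK h1) -h mul1r.
    by rewrite eqxx.
  by field; rewrite h1 subr_eq0 h2.
have LD : Li *m D = Vi *m Ct *m invmx Vj.
  by rewrite /D !mulmxA mulmxV // mul1mx.
have DL : D *m Lj = Vi *m (Ct - M) *m invmx Vj.
  rewrite /D -!mulmxA Hj !mulmxA -(mulmxA _ Ct) E !mulmxA -(mulmxA _ Vi) -LVi.
  by rewrite !mulmxA mulVmx // mul1mx.
rewrite LD DL -mulmxBl -mulmxBr opprB addrC subrK /M.
by rewrite !mulmxA mulmxV // mul1mx -!mulmxA mulmxV // mulmx1.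
Qed.
End Gen.
Unset Implicit Arguments.
Section Main.
Variables (R : realType) (d : nat -> nat).
Variables (L V : forall k, 'M[R[i]]_(d k)) (lam : forall k, 'I_(d k) -> R[i]).
Variable Cs : forall k, 'M[R[i]]_(d k.+1, d k).
Variable x : forall k, 'cV[R[i]]_(d k).

Lemma pert_auxE i m : (i <= m)%N -> pert_aux L V lam Cs x m i = pert L V lam Cs x i.
Proof.
elim/ltn_ind: i m => i IH m him.
rewrite /pert; case: m him => [|m] him.
  by move: him; rewrite leqn0 => /eqP ->.
case: i IH him => [|i] IH him /=.
  by rewrite big_ord0 addr0.
congr (_ + _); apply: eq_bigr => j _.
by rewrite IH ?ltn_ord // ?IH // -ltnS (leq_trans (ltn_ord j)).
Qed.

Lemma pert0 : pert L V lam Cs x 0 = x 0.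
Proof. by []. Qed.

Lemma pertS i : pert L V lam Cs x i.+1 = x i.+1 +
  \sum_(j < i.+1) ((-1) ^+ (i - j) *: (Dmx L V lam Cs i.+1 j *m pert L V lam Cs x j)).
Proof.
rewrite {1}/pert /=; congr (_ + _); apply: eq_bigr => j _.
by rewrite pert_auxE // -ltnS.
Qed.

Lemma Dmx_diag i : Dmx L V lam Cs i i = 1%:M.
Proof. by case: i => [|i] /=; rewrite ?eqxx /idmx conform_mx_id. Qed.

Lemma x_as_sum i : x i = \sum_(j < i.+1)
   ((-1) ^+ (i - j) *: (Dmx L V lam Cs i j *m pert L V lam Cs x j)).
Proof.
rewrite big_ord_recr /= subnn expr0 scale1r Dmx_diag mul1mx.
case: i => [|i]; first by rewrite big_ord0 add0r.
rewrite pertS addrCA -big_split /= big1 ?addr0 // => j _.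
rewrite subSn; last by rewrite -ltnS.
by rewrite exprS mulN1r scaleNr addNr.
Qed.

End Main.
Section Main2.
Variables (R : realType) (d : nat -> nat).
Variables (L V : forall k, 'M[R[i]]_(d k)) (lam : forall k, 'I_(d k) -> R[i]).
Variable Cs : forall k, 'M[R[i]]_(d k.+1, d k).

Lemma lam_facts (n : nat) :
  (forall k, (k < n)%N -> L k \in unitmx) ->
  (forall k, (k < n)%N -> V k \in unitmx) ->
  (forall k, (k < n)%N -> L k *m V k = V k *m diag_mx (\row_s lam k s)) ->
  (forall k l, (k < n)%N -> (l < n)%N -> k != l ->
     forall a : R[i], ~~ (eigenvalue (L k) a && eigenvalue (L l) a)) ->
  (forall k (s : 'I_(d k)), (k < n)%N -> lam k s != 0) /\
  (forall k l (s : 'I_(d k)) (t : 'I_(d l)), (k < n)%N -> (l < n)%N -> k != l ->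
      lam k s != lam l t).
Proof.
move=> HLu HVu HLV Hdist.
have eig k (s : 'I_(d k)) : (k < n)%N -> eigenvalue (L k) (lam k s).
  move=> hk; have [h1 h2] := eig_row s (HVu k hk) (HLV k hk).
  by apply/eigenvalueP; exists (row s (invmx (V k))).
split.
  move=> k s hk; apply/negP => /eqP h0.
  have [h1 h2] := eig_row s (HVu k hk) (HLV k hk).
  move: h1; rewrite h0 scale0r => h1.
  have : row s (invmx (V k)) *m L k *m invmx (L k) = 0 by rewrite h1 mul0mx.
  by rewrite -mulmxA mulmxV ?HLu // mulmx1 => h; rewrite h eqxx in h2.
move=> k l s t hk hl hkl; apply/negP => /eqP h.
have := Hdist k l hk hl hkl (lam k s).
by rewrite eig // h eig.
Qed.

Lemma conj_main (n : nat) (x : forall k, 'cV[R[i]]_(d k)) :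
  (forall k, (k < n)%N -> L k \in unitmx) ->
  (forall k, (k < n)%N -> V k \in unitmx) ->
  (forall k, (k < n)%N -> L k *m V k = V k *m diag_mx (\row_s lam k s)) ->
  (forall k l, (k < n)%N -> (l < n)%N -> k != l ->
     forall a : R[i], ~~ (eigenvalue (L k) a && eigenvalue (L l) a)) ->
  forall i, (i < n)%N ->
  pert L V lam Cs (Lin L Cs x) i = L i *m pert L V lam Cs x i.
Proof.
move=> HLu HVu HLV Hdist.
have [lam0 lamd] := lam_facts _ HLu HVu HLV Hdist.
have sylv i j : (i.+1 < n)%N -> (j < i.+1)%N ->
    Dmx L V lam Cs i.+1 j *m L j =
    L i.+1 *m Dmx L V lam Cs i.+1 j - Cs i *m Dmx L V lam Cs i j.
  move=> hi hj.
  have hjn : (j < n)%N by apply: ltn_trans hi.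
  have E : L i.+1 *m Dmx L V lam Cs i.+1 j - Dmx L V lam Cs i.+1 j *m L j
           = Cs i *m Dmx L V lam Cs i j.
    rewrite /= (ltn_eqF hj) hj.
    have h1 : forall l, lam i.+1 l != 0 by move=> l; apply: lam0.
    have h2 : forall l m, lam i.+1 l != lam j m.
      by move=> l m; apply: lamd => //; rewrite gtn_eqF.
    have S := (sylvester (Cs i) (Dmx L V lam Cs i j) (HLu _ hi) (HVu _ hi) (HVu _ hjn) (HLV _ hi) (HLV _ hjn) h1 h2).
    exact S.
  by rewrite -E opprB addrC subrK.
elim/ltn_ind => -[|i] IH hi; first by [].
rewrite !pertS.
have -> : Lin L Cs x i.+1 = L i.+1 *m x i.+1 + Cs i *m x i by [].
have E : \sum_(j < i.+1) (-1) ^+ (i - j) *: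
     (Dmx L V lam Cs i.+1 j *m pert L V lam Cs (Lin L Cs x) j) =
   L i.+1 *m \sum_(j < i.+1) (-1) ^+ (i - j) *:
     (Dmx L V lam Cs i.+1 j *m pert L V lam Cs x j) -
   Cs i *m \sum_(j < i.+1) (-1) ^+ (i - j) *:
     (Dmx L V lam Cs i j *m pert L V lam Cs x j).
  rewrite !mulmx_sumr -sumrB; apply: eq_bigr => j _.
  rewrite IH //; last by apply: ltn_trans hi.
  by rewrite mulmxA sylv // -!scalemxAr -scalerBr !mulmxA mulmxBl.
rewrite E -x_as_sum mulmxDr.
by rewrite -addrA [Cs i *m x i + _]addrC subrK.
Qed.
End Main2.

Theorem corollary2 (R : realType) (n : nat) (d : nat -> nat)
  (L V : forall k, 'M[R[i]]_(d k)) (lam : forall k, 'I_(d k) -> R[i])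
  (Cs : forall k, 'M[R[i]]_(d k.+1, d k))
  (nrm : forall k, 'cV[R[i]]_(d k) -> R) :
  (0 < n)%N ->
  (forall k, (k < n)%N -> (0 < d k)%N) ->
  (forall k, (k < n)%N -> is_norm (nrm k)) ->
  (forall k, (k < n)%N -> L k \in unitmx) ->
  (forall k, (k < n)%N -> V k \in unitmx) ->
  (forall k, (k < n)%N -> L k *m V k = V k *m diag_mx (\row_s lam k s)) ->
  (forall k l, (k < n)%N -> (l < n)%N -> k != l ->
     forall a : R[i], ~~ (eigenvalue (L k) a && eigenvalue (L l) a)) ->
  (forall k, (k.+1 < n)%N -> opnorm (nrm k) (L k) < opnorm (nrm k.+1) (L k.+1)) ->
  opnorm (nrm n.-1) (L n.-1) <= 1 ->
  forall (i0 : nat) (s : 'I_(d i0)), (i0 < n)%N ->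
  forall x : forall k, 'cV[R[i]]_(d k),
    Koopman L Cs (fun y => Psi V s (pert L V lam Cs y)) x
    = lam i0 s * Psi V s (pert L V lam Cs x).
Proof.
move=> _ _ _ HLu HVu HLV Hdist _ _ i0 s hi x.
rewrite /Koopman /Psi /psi (@conj_main R d L V lam Cs n x HLu HVu HLV Hdist i0 hi).
have H : invmx (V i0) *m L i0 = diag_mx (\row_k lam i0 k) *m invmx (V i0).
  by rewrite -[invmx (V i0) *m L i0]mulmx1 -(mulmxV (HVu _ hi)) !mulmxA
     -(mulmxA _ (L i0)) HLV // mulmxA mulVmx ?HVu // mul1mx.
by rewrite mulmxA H -mulmxA mul_diag_mx !mxE.
Qed.
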